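(* Let $G$ be a modular noetherian right $\ell$-group with strong order unit $s$ and degree homomorphism $\deg$. For $g \in G^-$, the sequence \[ \iota_i(g) := \deg(g \vee s^{-i}) - \deg(g \vee s^{-(i-1)}) \qquad (i \geq 1) \] is non-increasing.
   Context: A right $\ell$-group is a group $G$ (identity $e$) with a right-invariant partial order making $G$ a lattice. It is modular if the lattice is modular. It is noetherian if for each $g$ the set $\{h \geq g\}$ satisfies the descending chain condition and the set $\{h \leq g\}$ satisfies the ascending chain condition. $G^- = \{g \leq e\}$. A strong order unit is an element $s > e$ such that $x \mapsto sx$ is a lattice automorphism of $G$ and every $g$ satisfies $g \leq s^k$ for some $k \in \mathbb{Z}$. The degree homomorphism $\deg : G \to \mathbb{Z}$ is the unique group homomorphism sending each $g \in G^-$ to the (well-defined) number of factors in any factorization of $g$ into elements covered by $e$. *)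

(* Defs.v *)
From mathcomp Require Import all_boot all_order all_algebra.
From Stdlib Require List.
Set Implicit Arguments. Unset Strict Implicit. Unset Printing Implicit Defensive.
Import GRing.Theory Num.Theory.

Record rlgroup := RLGroup {
  car :> Type;
  mul : car -> car -> car;
  gone : car;
  inv : car -> car;
  le : car -> car -> Prop;
  join : car -> car -> car;
  meet : car -> car -> car;
  mulA : forall x y z, mul x (mul y z) = mul (mul x y) z;
  mul1x : forall x, mul gone x = x;
  mulx1 : forall x, mul x gone = x;
  mulVx : forall x, mul (inv x) x = gone;
  mulxV : forall x, mul x (inv x) = gone;
  le_refl : forall x, le x x;
  le_trans : forall x y z, le x y -> le y z -> le x z;
  le_anti : forall x y, le x y -> le y x -> x = y;
  le_rmul : forall x y z, le x y -> le (mul x z) (mul y z);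
  join_l : forall x y, le x (join x y);
  join_r : forall x y, le y (join x y);
  join_lub : forall x y z, le x z -> le y z -> le (join x y) z;
  meet_l : forall x y, le (meet x y) x;
  meet_r : forall x y, le (meet x y) y;
  meet_glb : forall x y z, le z x -> le z y -> le z (meet x y)
}.

Arguments mul {r}. Arguments gone {r}. Arguments inv {r}. Arguments le {r}.
Arguments join {r}. Arguments meet {r}.

Section Defs.
Variable G : rlgroup.

Definition lt (x y : G) : Prop := le x y /\ x <> y.

Definition covered_by_e (c : G) : Prop :=
  lt c gone /\ forall h : G, lt c h -> ~ lt h gone.

Definition modular : Prop :=
  forall x y z : G, le x z -> join x (meet y z) = meet (join x y) z.

Definition noetherian : Prop :=
  forall g : G,
    (~ exists f : nat -> G, (forall n, le g (f n)) /\ (forall n, lt (f n.+1) (f n)))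
 /\ (~ exists f : nat -> G, (forall n, le (f n) g) /\ (forall n, lt (f n) (f n.+1))).

Definition gpow (x : G) (n : nat) : G := iter n (mul x) gone.

Definition zpow (x : G) (k : int) : G :=
  match k with
  | Posz n => gpow x n
  | Negz n => inv (gpow x n.+1)
  end.

Definition strong_order_unit (s : G) : Prop :=
  lt gone s
  /\ bijective (mul s)
  /\ (forall x y : G, mul s (join x y) = join (mul s x) (mul s y))
  /\ (forall x y : G, mul s (meet x y) = meet (mul s x) (mul s y))
  /\ (forall g : G, exists k : int, le g (zpow s k)).

Definition degree_hom (deg : G -> int) : Prop :=
  (forall x y : G, deg (mul x y) = (deg x + deg y)%R)
  /\ (forall l : seq G, (forall c, List.In c l -> covered_by_e c) ->
        deg (foldr mul gone l) = Posz (size l)).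

Definition iotad (s : G) (deg : G -> int) (i : nat) (g : G) : int :=
  (deg (join g (zpow s (- (Posz i))%R)) - deg (join g (zpow s (- (Posz i - 1))%R)))%R.

End Defs.

(* Main.v *)
From Pilot Require Import Defs.
From mathcomp Require Import all_boot all_order all_algebra.
From mathcomp Require Import zify.
From Stdlib Require Import Classical ClassicalEpsilon.
Import Pilot.Defs.
Set Implicit Arguments. Unset Strict Implicit. Unset Printing Implicit Defensive.
Import GRing.Theory Num.Theory.

Lemma minimal_ex (A : Type) (S : A -> Prop) (R : A -> A -> Prop) :
  (~ exists f : nat -> A, (forall n, S (f n)) /\ (forall n, R (f n.+1) (f n))) ->
  (exists x, S x) -> exists m, S m /\ forall t, S t -> ~ R t m.
Proof.
move=> Hno [x0 Hx0]; apply: NNPP => Hn.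
have step : forall x, exists t, S x -> S t /\ R t x.
  move=> x; case: (classic (S x)) => Sx; last by exists x.
  apply: NNPP => Hc; apply: Hn; exists x; split => // t St Rt.
  by apply: Hc; exists t.
pose f x := proj1_sig (constructive_indefinite_description _ (step x)).
have fP : forall x, S x -> S (f x) /\ R (f x) x.
  by move=> x; rewrite /f; case: constructive_indefinite_description.
apply: Hno; exists (fun n => iter n f x0).
have HS : forall n, S (iter n f x0).
  by elim=> [|n IH] //=; case: (fP _ IH).
split=> // n /=; by case: (fP _ (HS n)).
Qed.

Section Aux.
Variable G : rlgroup.
Implicit Types a b x y z w c d h : G.

Lemma mul_cancel_r x y z : mul x z = mul y z -> x = y.
Proof.
move=> H; by rewrite -(mulx1 x) -(mulx1 y) -(mulxV z) !mulA H.
Qed.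

Lemma mul_cancel_l x y z : mul z x = mul z y -> x = y.
Proof.
move=> H; by rewrite -(mul1x x) -(mul1x y) -(mulVx z) -!mulA H.
Qed.

Lemma inv_uniq a b : mul a b = gone -> b = inv a.
Proof. by move=> H; apply: (@mul_cancel_l _ _ a); rewrite H mulxV. Qed.

Lemma invM a b : inv (mul a b) = mul (inv b) (inv a).
Proof.
symmetry; apply: inv_uniq.
by rewrite -mulA (mulA b) mulxV mul1x mulxV.
Qed.

Lemma inv1 : @inv G (@gone G) = @gone G.
Proof. by symmetry; apply: inv_uniq; rewrite mulx1. Qed.

Lemma lt_rmul x y z : lt x y -> lt (mul x z) (mul y z).
Proof.
move=> [H1 H2]; split; first exact: le_rmul.
by move=> E; apply: H2; apply: mul_cancel_r E.
Qed.

Lemma join_comm x y : join x y = join y x.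
Proof. apply: le_anti; apply: join_lub; auto using join_l, join_r. Qed.

Lemma join_assoc x y z : join x (join y z) = join (join x y) z.
Proof.
apply: le_anti; apply: join_lub.
- apply: le_trans (join_l _ _); exact: join_l.
- apply: join_lub; last exact: join_r.
  apply: le_trans (join_l _ _); exact: join_r.
- apply: join_lub; first exact: join_l.
  apply: le_trans (join_r _ _); exact: join_l.
- apply: le_trans (join_r _ _); exact: join_r.
Qed.

Lemma join_le x y : le x y -> join x y = y.
Proof.
move=> H; apply: le_anti; first by apply: join_lub => //; apply: le_refl.
exact: join_r.
Qed.

Lemma join_mono x y w : le x y -> le (join x w) (join y w).
Proof.
move=> H; apply: join_lub; last exact: join_r.
apply: le_trans H _; exact: join_l.
Qed.

Lemma meet_le x y : le x y -> meet y x = x.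
Proof.
move=> H; apply: le_anti; first exact: meet_r.
apply: meet_glb => //; exact: le_refl.
Qed.

Definition cover c d := lt c d /\ forall h, lt c h -> ~ lt h d.

Inductive chain : G -> G -> Prop :=
| crefl y : chain y y
| cstep c d y : cover c d -> chain d y -> chain c y.

Lemma chain_ex : noetherian G -> forall x y, le x y -> chain x y.
Proof.
move=> Hn x y Hxy; apply: NNPP => Hc.
have [m [[Hmy Hmc] Hmax]] := @minimal_ex G (fun z => le z y /\ ~ chain z y)
   (fun t m => lt m t) (fun '(ex_intro f (conj H1 H2)) =>
      (proj2 (Hn y)) (ex_intro _ f (conj (fun n => proj1 (H1 n)) H2)))
   (ex_intro _ x (conj Hxy Hc)).
have Hmy' : lt m y by split => // E; apply: Hmc; rewrite E; apply: crefl.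
have [z [[Hmz Hzy] Hmin]] := @minimal_ex G (fun z => lt m z /\ le z y)
   (fun t u => lt t u) (fun '(ex_intro f (conj H1 H2)) =>
      (proj1 (Hn m)) (ex_intro _ f (conj (fun n => proj1 (proj1 (H1 n))) H2)))
   (ex_intro _ y (conj Hmy' (le_refl y))).
apply: Hmc; apply: (@cstep m z y).
  split => // h Hmh Hhz; apply: (Hmin h) => //; split => //.
  exact: le_trans (proj1 Hhz) Hzy.
apply: NNPP => Hzc; exact: (Hmax z (conj Hzy Hzc) Hmz).
Qed.

Lemma cover_join c d w : modular G -> cover c d ->
  join c w = join d w \/ cover (join c w) (join d w).
Proof.
move=> Hmod [[Hcd Hne] Hcov].
case: (classic (join c w = join d w)) => E; [by left | right].
split; first by split => //; apply: join_mono.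
move=> h [Hch Hneh] [Hhd Hnhd].
have Hc_h : le c h := le_trans (join_l c w) Hch.
have Hw_h : le w h := le_trans (join_r c w) Hch.
case: (classic (meet d h = d)) => Edh.
  apply: Hnhd; apply: le_anti => //; apply: join_lub => //.
  by rewrite -Edh; apply: meet_r.
have Ec : meet d h = c.
  apply: NNPP => Hne2; apply: (Hcov (meet d h)).
    by split => //; [apply: meet_glb | move=> X; apply: Hne2; rewrite X].
  by split => //; apply: meet_l.
apply: Hneh.
have := Hmod (join c w) d h Hch.
have A : join (join c w) c = join c w.
  by rewrite join_comm join_assoc (join_le (le_refl c)).
have B : join (join c w) d = join d w.
  by rewrite join_comm join_assoc (join_comm d c) (join_le Hcd).
by rewrite Ec A B (meet_le Hhd).
Qed.

Variable deg : G -> int.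
Hypothesis Hdeg : degree_hom deg.

Lemma cover_deg c d : cover c d -> deg c = (deg d + 1)%R.
Proof.
move=> [[Hcd Hne] Hcov].
have Ec : c = mul (mul c (inv d)) d by rewrite -mulA mulVx mulx1.
have Hce : covered_by_e (mul c (inv d)).
  split.
    split; first by rewrite -(mulxV d); apply: le_rmul.
    by move=> X; apply: Hne; rewrite Ec X mul1x.
  move=> h Hh1 Hh2.
  apply: (Hcov (mul h d)).
    by rewrite {1}Ec; apply: lt_rmul.
  by rewrite -{2}(mul1x d); apply: lt_rmul.
have := (proj2 Hdeg) [:: mul c (inv d)].
rewrite /= mulx1 => H1.
rewrite {1}Ec (proj1 Hdeg) H1; first by rewrite addrC.
by move=> c0 [<-|[]].
Qed.

Lemma key x y w : modular G -> chain x y ->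
  (deg (join x w) - deg (join y w) <= deg x - deg y)%R.
Proof.
move=> Hmod; elim=> [y0|c d y0 Hcd _ IH]; first by rewrite !subrr.
have Hd := cover_deg Hcd.
have Hw : (deg (join c w) - deg (join d w) <= 1)%R.
  case: (cover_join w Hmod Hcd) => [->|H]; first by rewrite subrr.
  by rewrite (cover_deg H); lia.
lia.
Qed.

End Aux.

Theorem mainTheorem5 (G : rlgroup) (s : G) (deg : G -> int) :
  modular G -> noetherian G -> strong_order_unit s -> degree_hom deg ->
  forall g : G, le g gone ->
  forall i : nat, (1 <= i)%N -> (iotad s deg i.+1 g <= iotad s deg i g)%R.
Proof.
move=> Hmod Hn [[Hs1 _] [_ [Hjoin [_ _]]]] Hd g Hg [|k] // _.
rewrite /iotad.
have -> : (Posz k.+2 - 1 = Posz k.+1)%R by lia.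
have -> : (Posz k.+1 - 1 = Posz k)%R by lia.
pose t n := zpow s (- Posz n)%R.
have tE : forall n, t n = inv (gpow s n).
  by case=> [|n] //=; rewrite /t /= inv1.
have comm : forall n, mul s (gpow s n) = mul (gpow s n) s.
  elim=> [|n IH] /=; first by rewrite mul1x mulx1.
  by rewrite -mulA -IH.
have st : forall n, mul s (t n.+1) = t n.
  move=> n; rewrite !tE /= comm invM mulA mulxV mul1x //.
have tle : forall n, le (t n.+1) (t n).
  move=> n; have := le_rmul (t n.+1) Hs1; by rewrite mul1x st.
have gle : le g (mul s g) by have := le_rmul g Hs1; rewrite mul1x.
rewrite -/(t k.+2) -/(t k.+1) -/(t k).
have J : forall a, join (join g a) (mul s g) = join (mul s g) a.
  by move=> a; rewrite (join_comm g a) -join_assoc (join_le gle) join_comm.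
have E : forall n, deg (join g (t n.+1)) = (deg (join (mul s g) (t n)) - deg s)%R.
  by move=> n; rewrite -(st n) -Hjoin (proj1 Hd); lia.
have K := key Hd (mul s g) Hmod
  (chain_ex Hn (join_mono (g) (tle k))).
rewrite (join_comm (t k.+1) g) (join_comm (t k) g) !J in K.
have := E k.+1; have := E k; lia.
Qed.
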